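(* Assume ideal Weyl gates. Let $\mathcal{M}$ be a noisy $n$-qudit instrument with generalized Pauli fidelities $\tilde\nu_{s,t}$. Let $\vec k=(k_1,\dots,k_m)$ be the output of the instrument benchmarking routine with sequence length $m$ and initial state $\rho$. Let $c_1,\dots,c_m\in\mathbb{Z}_d^n$ and set $c_{m+1}=0$. Then the expectation value of $$\prod_{j=1}^m\chi_{k_j}(c_j-c_{j+1})^*$$ equals $$\kappa(\vec c)=\operatorname{tr}\big(Z^{-c_1}\rho\big)\prod_{j=1}^m\tilde\nu_{c_j,c_{j+1}}.$$
   Context: Let $d,n$ be positive integers, with arithmetic on $\mathbb{Z}_d^n$ modulo $d$. Let $\chi_z(j)=e^{2\pi i z\cdot j/d}$, $X^x=\sum_j|j+x\rangle\langle j|$, and $Z^z=\sum_j\chi_z(j)|j\rangle\langle j|$ (so $Z^{-c}$ denotes $Z^{(-c)}$). For an operator $A$, $\mathcal{A}(\rho)=A\rho A^\dagger$. An instrument $\{\mathcal{M}_o\}_{o\in\mathbb{Z}_d^n}$ is a family of completely positive trace-non-increasing maps summing to a trace-preserving map. Its generalized Pauli fidelities are $$\tilde\nu_{s,t}=d^{-n}\sum_k\chi_k(s-t)^*\operatorname{tr}\big((Z^t)^\dagger\mathcal{M}_k(Z^s)\big).$$ The instrument benchmarking routine with sequence length $m$ proceeds as follows: - Prepare $\rho$ and set $\alpha_0=0$. - For $i=1,\dots,m$: choose $\alpha_i,\beta_i\in\mathbb{Z}_d^n$ uniformly at random; apply the ideal gate $Z^{\beta_i}X^{\alpha_{i-1}-\alpha_i}$;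 measure with the noisy instrument (outcome $o$ occurs with probability $\operatorname{tr}\mathcal{M}_o(\sigma)$ and leaves the state $\mathcal{M}_o(\sigma)/\operatorname{tr}\mathcal{M}_o(\sigma)$), obtaining $o_i$; record $k_i=\alpha_i+o_i$. - Return $\vec k=(k_1,\dots,k_m)$. *)

(* Defs.v *)
From mathcomp Require Import all_boot all_algebra.
From mathcomp Require Import reals trigo.
From mathcomp.real_closed Require Export complex.
Set Implicit Arguments. Unset Strict Implicit. Unset Printing Implicit Defensive.
Import GRing.Theory Num.Theory.
Local Open Scope ring_scope.

Section Weyl.
Context (R : realType) (d n : nat).

Notation C := R[i].

(* Z_d^n ; for d > 0, 'I_(d.-1.+1) is 'I_d with arithmetic mod d *)
Definition Zdn := {ffun 'I_n -> 'I_(d.-1.+1)}.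

Definition omega : C := (cos (2 * pi / d%:R) +i* sin (2 * pi / d%:R))%C.

(* z . j  (as a natural number; only its class mod d matters) *)
Definition dotn (z j : Zdn) : nat := (\sum_(i < n) (z i : nat) * (j i : nat))%N.

Definition chi (z j : Zdn) : C := omega ^+ dotn z j.

(* operators on C^{Z_d^n} as matrices indexed by Z_d^n *)
Definition Op := Zdn -> Zdn -> C.
Definition opmul (A B : Op) : Op := fun x y => \sum_z A x z * B z y.
Definition adj (A : Op) : Op := fun x y => (A y x)^*.
Definition tr (A : Op) : C := \sum_x A x x.
Definition conjop (A : Op) (rho : Op) : Op := opmul (opmul A rho) (adj A).

Definition Xop (x : Zdn) : Op := fun a b => (a == b + x)%:R.
Definition Zop (z : Zdn) : Op := fun a b => (a == b)%:R * chi z a.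

Definition psd (I : finType) (A : I -> I -> C) : Prop :=
  forall v : I -> C, 0 <= \sum_a \sum_b (v a)^* * A a b * v b.

Definition density (rho : Op) : Prop := psd rho /\ tr rho = 1.

Definition linear_map (Phi : Op -> Op) : Prop :=
  forall (c : C) (X Y : Op),
    Phi (fun x y => c * X x y + Y x y) = (fun x y => c * Phi X x y + Phi Y x y).

(* id_k (x) Phi acting on operators on C^k (x) C^{Z_d^n} *)
Definition ampl (k : nat) (Phi : Op -> Op)
    (X : 'I_k * Zdn -> 'I_k * Zdn -> C) : 'I_k * Zdn -> 'I_k * Zdn -> C :=
  fun p q => Phi (fun a b => X (p.1, a) (q.1, b)) p.2 q.2.

Definition completely_positive (Phi : Op -> Op) : Prop :=
  linear_map Phi /\
  forall (k : nat) (X : 'I_k * Zdn -> 'I_k * Zdn -> C), psd X -> psd (@ampl k Phi X).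

Definition instrument (M : Zdn -> Op -> Op) : Prop :=
  [/\ forall o, completely_positive (M o),
      forall o rho, psd rho -> tr (M o rho) <= tr rho &
      forall rho, \sum_o tr (M o rho) = tr rho].

Definition nu (M : Zdn -> Op -> Op) (s t : Zdn) : C :=
  (#|Zdn|%:R)^-1 *
  \sum_k (chi k (s - t))^* * tr (opmul (adj (Zop t)) (M k (Zop s))).

(* probability of a sequence of outcomes, computed sequentially: each step
   (x, b, o) applies the ideal gate Z^b X^x, then outcome o occurs with
   probability tr M_o(sigma) and the state is updated to M_o(sigma)/tr M_o(sigma). *)
Fixpoint run (M : Zdn -> Op -> Op) (sigma : Op) (l : seq (Zdn * Zdn * Zdn)) : C :=
  match l with
  | [::] => 1
  | (x, b, o) :: l' =>
      let tau := conjop (opmul (Zop b) (Xop x)) sigma in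
      let p := tr (M o tau) in
      p * run M (fun u v => p^-1 * M o tau u v) l'
  end.

Section Seq.
Context (m : nat).
(* 0-based access: at f j = f_{j+1} for j < m, and 0 otherwise *)
Definition at_ (f : {ffun 'I_m -> Zdn}) (j : nat) : Zdn :=
  match (insub j : option 'I_m) with Some i => f i | None => 0 end.

(* alpha_{i} (0-based: step i uses alpha_{i-1}, with alpha_0 = 0) *)
Definition prev_alpha (a : {ffun 'I_m -> Zdn}) (i : nat) : Zdn :=
  if i is i'.+1 then at_ a i' else 0.

Definition steps (a b o : {ffun 'I_m -> Zdn}) : seq (Zdn * Zdn * Zdn) :=
  [seq (prev_alpha a i - at_ a i, at_ b i, at_ o i) | i <- iota 0 m].

(* expectation of prod_j chi_{k_j}(c_j - c_{j+1})^*, k_j = alpha_j + o_j,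
   over uniform alpha, beta and the outcome distribution *)
Definition bench_expectation (M : Zdn -> Op -> Op) (rho : Op)
    (c : {ffun 'I_m -> Zdn}) : C :=
  \sum_(a : {ffun 'I_m -> Zdn}) \sum_(b : {ffun 'I_m -> Zdn})
  \sum_(o : {ffun 'I_m -> Zdn})
    ((#|Zdn|%:R ^+ (2 * m))^-1 * run M rho (steps a b o) *
     \prod_(j < m) (chi (at_ a j + at_ o j) (at_ c j - at_ c j.+1))^*).

Definition kappa (M : Zdn -> Op -> Op) (rho : Op) (c : {ffun 'I_m -> Zdn}) : C :=
  tr (opmul (Zop (- at_ c 0)) rho) * \prod_(j < m) nu M (at_ c j) (at_ c j.+1).
End Seq.
End Weyl.

(* Main.v *)
Require Import Defs.
From mathcomp Require Import all_boot all_order all_algebra.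
From mathcomp Require Import reals trigo lra.
From mathcomp Require Import boolp ring.
From mathcomp.real_closed Require Import complex.
Import Order.TTheory GRing.Theory Num.Theory.
Set Implicit Arguments. Unset Strict Implicit. Unset Printing Implicit Defensive.
Local Open Scope ring_scope.

Section S.
Variables (R : realType) (d : nat).
Local Notation th := (2 * pi / d%:R : R).
Lemma omega_exp k : omega R d ^+ k = (cos (k%:R * th) +i* sin (k%:R * th))%C.
Proof.
elim: k => [|k IH].
  by rewrite expr0 mul0r cos0 sin0.
rewrite exprS IH /omega.
simpc.
have -> : (k.+1%:R * th) = th + k%:R * th by rewrite mulrS mulrDl mul1r.
by rewrite cosD sinD [X in (_ +i* X)%C = _]addrC.
Qed.
Hypothesis hd : (0 < d)%N.
Lemma omega_d : omega R d ^+ d = 1.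
Proof.
rewrite omega_exp mulrC divfK; last by rewrite pnatr_eq0 -lt0n.
by rewrite mulr_natl cos2pi sin2pi.
Qed.

Lemma omega_conj : (omega R d)^* * omega R d = 1.
Proof.
rewrite /omega. simpc. by rewrite -!expr2 cos2Dsin2 mulrC subrr.
Qed.

Lemma omega_neq1 w : (0 < w < d)%N -> omega R d ^+ w != 1.
Proof.
move=> /andP[w0 wd]; rewrite omega_exp; apply/negP => /eqP [hc hs].
set t := w%:R * th in hc hs.
have t0 : 0 < t.
  by rewrite mulr_gt0 ?ltr0n // divr_gt0 ?ltr0n // mulr_gt0 ?ltr0n ?pi_gt0.
have t2 : t < pi *+ 2.
  rewrite /t mulrA ltr_pdivrMr ?ltr0n // [X in _ < X]mulrC.
  by rewrite -[pi *+ 2]mulr_natl ltr_pM2r ?mulr_gt0 ?pi_gt0 ?ltr0n // ltr_nat.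
case: (ltrgtP t pi) => tp.
- by move: (sin_gt0_pi (x:=t)); rewrite t0 tp hs ltxx => /(_ isT).
- have := sin_gt0_pi (x := t - pi).
  rewrite subr_gt0 tp ltrBlDr -mulr2n t2 => /(_ isT).
  by rewrite sinB sinpi cospi mulr0 subr0 mulrN1 hs oppr0 ltxx.
- by move: hc; rewrite tp cospi => h; lra.
Qed.

Lemma omega_mod k : omega R d ^+ (k %% d) = omega R d ^+ k.
Proof. exact: expr_mod omega_d. Qed.

Lemma omega_neq0 : omega R d != 0.
Proof.
apply/eqP => h; have := omega_d; rewrite h expr0n.
by case: d hd => // -[|k] _ /= /eqP; rewrite eq_sym oner_eq0.
Qed.

Lemma omega_conjV : (omega R d)^* = (omega R d)^-1.
Proof.
by rewrite -[LHS]mulr1 -(divff omega_neq0) mulrA omega_conj mul1r.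
Qed.

Variable n : nat.
Local Notation Z := (Zdn d n).
Local Notation ch := (@chi R d n).

Lemma chi_prod (z j : Z) : ch z j = \prod_(i < n) omega R d ^+ (z i * j i).
Proof. by rewrite /chi /dotn expr_sum. Qed.

Lemma valD (x y : 'I_(d.-1.+1)) : val (x + y) = ((x + y) %% d)%N.
Proof. by rewrite /=; congr (_ %% _)%N; exact: prednK. Qed.

Lemma chiD1 (a b j : Z) : ch (a + b) j = ch a j * ch b j.
Proof.
rewrite !chi_prod -big_split /=; apply: eq_bigr => i _.
by rewrite ffunE valD exprM omega_mod -exprM mulnDl exprD.
Qed.

Lemma chiC (a b : Z) : ch a b = ch b a.
Proof. by rewrite !chi_prod; apply: eq_bigr => i _; rewrite mulnC. Qed.

Lemma chiD2 (j a b : Z) : ch j (a + b) = ch j a * ch j b.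
Proof. by rewrite chiC chiD1 !(chiC j). Qed.

Lemma chi0 (j : Z) : ch 0 j = 1.
Proof. by rewrite chi_prod big1 // => i _; rewrite ffunE /= mul0n expr0. Qed.

Lemma chi0r (j : Z) : ch j 0 = 1.
Proof. by rewrite chiC chi0. Qed.

Lemma chiNK (a j : Z) : ch (- a) j * ch a j = 1.
Proof. by rewrite -chiD1 addNr chi0. Qed.

Lemma chi_neq0 (a j : Z) : ch a j != 0.
Proof. by apply/eqP => h; have := chiNK a j; rewrite h mulr0 => /eqP; rewrite eq_sym oner_eq0. Qed.

Lemma chiN1 (a j : Z) : ch (- a) j = (ch a j)^-1.
Proof.
by rewrite -[LHS]mulr1 -(divff (chi_neq0 a j)) mulrA chiNK mul1r.
Qed.

Lemma chiN2 (a j : Z) : ch j (- a) = (ch j a)^-1.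
Proof. by rewrite chiC chiN1 chiC. Qed.

Lemma chi_conj (a j : Z) : (ch a j)^* = (ch a j)^-1.
Proof. by rewrite /chi -exprVn -omega_conjV rmorphXn. Qed.


Lemma sum_chi1 (w : Z) : \sum_(b : Z) ch b w = (w == 0)%:R * #|Z|%:R.
Proof.
case: (eqVneq w 0) => [->|wn0].
  rewrite mul1r; under eq_bigr do rewrite chi0r.
  by rewrite sumr_const.
have : ~~ [forall i, w i == 0].
  apply: contra wn0 => /forallP h; apply/eqP/ffunP => i.
  by rewrite ffunE; apply/eqP.
move/forallPn => [i wi].
have wi0 : (0 < w i)%N by rewrite lt0n.
have wid : (w i < d)%N by apply: leq_trans (ltn_ord (w i)) _; rewrite prednK.
have d2 : (1 < d.-1.+1)%N by apply: leq_ltn_trans wi0 _.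
set e : Z := [ffun j => (if j == i then inord 1 else ord0 : 'I_(d.-1.+1))].
have ce : ch e w = omega R d ^+ (w i).
  rewrite chi_prod (bigD1 i) //= big1 ?mulr1.
    by rewrite ffunE eqxx /= inordK // mul1n.
  by move=> j /negbTE ji; rewrite ffunE ji /= mul0n expr0.
have hne : ch e w != 1 by rewrite ce omega_neq1 // wi0 wid.
set S := \sum_(b : Z) _.
have hS : S = S * ch e w.
  rewrite {1}/S (reindex_inj (addIr e)) /=.
  by under eq_bigr do rewrite chiD1; rewrite -mulr_suml.
have : S * (1 - ch e w) = 0 by rewrite mulrBr mulr1 {1}hS subrr.
move/eqP; rewrite mulf_eq0 subr_eq0 [1 == _]eq_sym (negbTE hne) orbF => /eqP ->.
by rewrite mul0r.
Qed.


Lemma sum_delta_l (I : finType) (a : I) (F : I -> R[i]) :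
  \sum_i (a == i)%:R * F i = F a.
Proof.
rewrite (bigD1 a) //= eqxx mul1r big1 ?addr0 // => i ia.
by rewrite eq_sym (negbTE ia) mul0r.
Qed.

Lemma sum_delta_r (I : finType) (a : I) (F : I -> R[i]) :
  \sum_i F i * (a == i)%:R = F a.
Proof. by under eq_bigr do rewrite mulrC; apply: sum_delta_l. Qed.

Local Notation N := (#|Z|%:R : R[i]).

Lemma N_neq0 : N != 0.
Proof. by rewrite pnatr_eq0 -lt0n; apply/card_gt0P; exists 0. Qed.

Lemma ZX_entry (b y u v : Z) :
  opmul (Zop R b) (Xop R y) u v = ch b u * (u - y == v)%:R.
Proof.
rewrite /opmul /Zop /Xop.
under eq_bigr do rewrite [_ * ch b u]mulrC -mulrA.
by rewrite -mulr_sumr sum_delta_l subr_eq.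
Qed.

Lemma conjop_entry (b y : Z) (s : Op R d n) u v :
  conjop (opmul (Zop R b) (Xop R y)) s u v =
  ch b u * (ch b v)^-1 * s (u - y) (v - y).
Proof.
rewrite /conjop {1}/opmul /adj.
have h1 : forall z, opmul (opmul (Zop R b) (Xop R y)) s u z = ch b u * s (u - y) z.
  move=> z; rewrite {1}/opmul.
  under eq_bigr do rewrite ZX_entry -mulrA [_%:R * _]mulrC mulrA.
  exact: (@sum_delta_r Z (u - y) (fun w => ch b u * s w z)).
rewrite (eq_bigr (fun z => (ch b u * s (u - y) z / ch b v) * (v - y == z)%:R)); last first.
  move=> z _; rewrite h1 ZX_entry rmorphM /= conjC_nat chi_conj.
  by rewrite mulrA.
by rewrite (@sum_delta_r Z (v - y) (fun z => ch b u * s (u - y) z / ch b v)) mulrAC.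
Qed.

Lemma sum_conjop (y : Z) (s : Op R d n) u v :
  \sum_(b : Z) conjop (opmul (Zop R b) (Xop R y)) s u v =
  N * (u == v)%:R * s (u - y) (v - y).
Proof.
rewrite (eq_bigr (fun b => ch b (u - v) * s (u - y) (v - y))); last first.
  by move=> b _; rewrite conjop_entry -chiN2 -chiD2.
rewrite -mulr_suml sum_chi1 subr_eq0; ring.
Qed.


Lemma lin0 (Phi : Op R d n -> Op R d n) : linear_map Phi ->
  Phi (fun _ _ => 0) = (fun _ _ => 0).
Proof.
move=> h; have := h 1 (fun _ _ => 0) (fun _ _ => 0).
have -> : (fun x y : Z => 1 * (fun _ _ => 0 : R[i]) x y + (fun _ _ => 0) x y) = (fun _ _ => 0).
  by apply/funext => x; apply/funext => y; rewrite mulr0 addr0.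
move=> e; apply/funext => x; apply/funext => y.
have := congr1 (fun f => f x y) e; rewrite /= mul1r => /eqP.
by rewrite -subr_eq0 opprD addrA subrr sub0r oppr_eq0 => /eqP.
Qed.

Lemma lin_sum (Phi : Op R d n -> Op R d n) (I : Type) (s : seq I)
    (k : I -> R[i]) (F : I -> Op R d n) : linear_map Phi ->
  Phi (fun x y => \sum_(i <- s) k i * F i x y) =
  (fun x y => \sum_(i <- s) k i * Phi (F i) x y).
Proof.
move=> h; elim: s => [|a s IH].
  have -> : (fun x y => \sum_(i <- [::]) k i * F i x y) = (fun _ _ => 0).
    by apply/funext => x; apply/funext => y; rewrite big_nil.
  by rewrite lin0 //; apply/funext => x; apply/funext => y; rewrite big_nil.
have -> : (fun x y => \sum_(i <- a :: s) k i * F i x y) =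
  (fun x y => k a * F a x y + (fun x y => \sum_(i <- s) k i * F i x y) x y).
  by apply/funext => x; apply/funext => y; rewrite big_cons.
rewrite h IH; apply/funext => x; apply/funext => y.
by rewrite big_cons.
Qed.

Lemma tr_sum (A : Op R d n) (I : Type) (s : seq I) (k : I -> R[i]) (F : I -> Op R d n) :
  tr (opmul A (fun x y => \sum_(i <- s) k i * F i x y)) =
  \sum_(i <- s) k i * tr (opmul A (F i)).
Proof.
rewrite /tr /opmul.
under eq_bigr do under eq_bigr do rewrite mulr_sumr.
under eq_bigr do rewrite exchange_big.
rewrite exchange_big; apply: eq_bigr => i _.
rewrite mulr_sumr; apply: eq_bigr => x _; rewrite mulr_sumr; apply: eq_bigr => z _.
by rewrite mulrCA.
Qed.


Variable M : Z -> Op R d n -> Op R d n.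
Hypothesis hlin : forall o, linear_map (M o).

Definition Eop (j : Z) : Op R d n := fun u v => (j == u)%:R * (j == v)%:R.
Definition phi (c' o j : Z) := tr (opmul (Zop R (- c')) (M o (Eop j))).

Lemma stepA (c' o y : Z) (s : Op R d n) :
  \sum_(b : Z) tr (opmul (Zop R (- c')) (M o (conjop (opmul (Zop R b) (Xop R y)) s))) =
  N * \sum_(j : Z) s (j - y) (j - y) * phi c' o j.
Proof.
have e : (fun u v => \sum_(b <- index_enum Z) 1 * conjop (opmul (Zop R b) (Xop R y)) s u v) =
         (fun u v => \sum_(j <- index_enum Z) (N * s (j - y) (j - y)) * Eop j u v).
  apply/funext => u; apply/funext => v.
  under eq_bigr do rewrite mul1r.
  rewrite sum_conjop.
  rewrite (eq_bigr (fun j : Z => (u == j)%:R * (N * s (j - y) (j - y) * (j == v)%:R))); last first.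
    by move=> j _; rewrite /Eop [u == j]eq_sym; ring.
  rewrite (@sum_delta_l Z u (fun j : Z => N * s (j - y) (j - y) * (j == v)%:R)).
  by case: (eqVneq u v) => [->|uv]; rewrite ?eqxx ?(negbTE uv) /=; ring.
have := congr1 (fun X => tr (opmul (Zop R (- c')) (M o X))) e.
rewrite /= (@lin_sum (M o) Z (index_enum Z) (fun _ => 1)
   (fun b : Z => conjop (opmul (Zop R b) (Xop R y)) s) (hlin o)).
rewrite (@lin_sum (M o) Z (index_enum Z) (fun j : Z => N * s (j - y) (j - y)) Eop (hlin o)).
rewrite !tr_sum => h.
rewrite (eq_bigr (fun b : Z => 1 * tr (opmul (Zop R (- c')) (M o (conjop (opmul (Zop R b) (Xop R y)) s))))); last by move=> b _; rewrite mul1r.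
rewrite h mulr_sumr; apply: eq_bigr => j _.
by rewrite /phi mulrA.
Qed.

Lemma adjZ (c : Z) : adj (Zop R c) = Zop R (- c).
Proof.
apply/funext => x; apply/funext => y; rewrite /adj /Zop rmorphM /= conjC_nat chi_conj chiN1.
by case: (eqVneq x y) => [->|xy]; rewrite ?eqxx //= !mul0r.
Qed.

Lemma stepB (c c' : Z) : nu M c c' =
  N^-1 * \sum_(k : Z) (ch k (c - c'))^* * \sum_(j : Z) ch c j * phi c' k j.
Proof.
rewrite /nu adjZ; congr (_ * _); apply: eq_bigr => k _; congr (_ * _).
have -> : Zop R c = (fun u v => \sum_(j <- index_enum Z) ch c j * Eop j u v).
  apply/funext => u; apply/funext => v.
  rewrite (eq_bigr (fun j : Z => (u == j)%:R * (ch c j * (j == v)%:R))); last first.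
    by move=> j _; rewrite /Eop [u == j]eq_sym; ring.
  rewrite (@sum_delta_l Z u (fun j : Z => ch c j * (j == v)%:R)) /Zop.
  by rewrite mulrC.
by rewrite (@lin_sum (M k) Z (index_enum Z) (ch c) Eop (hlin k)) tr_sum.
Qed.

Lemma stepC (c : Z) (s : Op R d n) :
  tr (opmul (Zop R (- c)) s) = \sum_(u : Z) (ch c u)^-1 * s u u.
Proof.
rewrite /tr /opmul; apply: eq_bigr => x _.
rewrite (eq_bigr (fun z : Z => (x == z)%:R * (ch (- c) x * s z x))); last first.
  by move=> z _; rewrite /Zop mulrA.
by rewrite (@sum_delta_l Z x (fun z : Z => ch (- c) x * s z x)) chiN1.
Qed.


Lemma zmod_id (j p u : Z) : j - (p - (u + (p - j))) = u.
Proof.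
by rewrite opprB addrCA -addrA [X in u + X]addrA subrK subrr addr0.
Qed.

Lemma core (s : Op R d n) (p c c' : Z) :
  \sum_(a : Z) \sum_(b : Z) \sum_(o : Z) (N ^+ 2)^-1 * (ch (a + o) (c - c'))^* *
     ((ch a c')^* * tr (opmul (Zop R (- c')) (M o (conjop (opmul (Zop R b) (Xop R (p - a))) s))))
  = (ch p c)^* * tr (opmul (Zop R (- c)) s) * nu M c c'.
Proof.
set L := fun a o j : Z => N^-1 * (ch (a + o) (c - c'))^-1 * (ch a c')^-1 *
   s (j - (p - a)) (j - (p - a)) * phi c' o j.
transitivity (\sum_(a : Z) \sum_(o : Z) \sum_(j : Z) L a o j).
  apply: eq_bigr => a _; rewrite exchange_big; apply: eq_bigr => o _.
  rewrite (eq_bigr (fun b : Z => ((N ^+ 2)^-1 * (ch (a + o) (c - c'))^* * (ch a c')^*) *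
     tr (opmul (Zop R (- c')) (M o (conjop (opmul (Zop R b) (Xop R (p - a))) s))))); last first.
    by move=> b _; rewrite !mulrA.
  rewrite -mulr_sumr stepA !mulr_sumr; apply: eq_bigr => j _.
  rewrite /L !chi_conj; field; by rewrite !chi_neq0 N_neq0.
rewrite exchange_big; under eq_bigr do rewrite exchange_big.
rewrite stepC stepB.
rewrite mulrA mulr_sumr; apply: eq_bigr => k _.
rewrite mulrA mulr_sumr; apply: eq_bigr => j _.
rewrite -!mulrA mulr_suml mulr_sumr.
rewrite (reindex_inj (addIr (p - j))) /=; apply: eq_bigr => u _.
rewrite /L zmod_id !chi_conj.
rewrite !chiD1 !chiD2 !chiN1 !chiN2 !invrK (chiC c u) (chiC c j).
field; by rewrite ?chi_neq0 ?N_neq0.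
Qed.


Definition fcons m (x : Z) (f : {ffun 'I_m -> Z}) : {ffun 'I_m.+1 -> Z} :=
  [ffun i => if unlift ord0 i is Some j then f j else x].

Lemma fconsK m (g : {ffun 'I_m.+1 -> Z}) : fcons (g ord0) [ffun j => g (lift ord0 j)] = g.
Proof.
apply/ffunP => i; rewrite ffunE.
by case: unliftP => [j ->|->] //; rewrite ffunE.
Qed.

Lemma sum_fcons m (F : {ffun 'I_m.+1 -> Z} -> R[i]) :
  \sum_g F g = \sum_(x : Z) \sum_(f : {ffun 'I_m -> Z}) F (fcons x f).
Proof.
rewrite pair_big /=; apply: (reindex (fun p : Z * {ffun 'I_m -> Z} => fcons p.1 p.2)).
exists (fun g : {ffun 'I_m.+1 -> Z} => (g ord0, [ffun j : 'I_m => g (lift ord0 j)])) => [[x f] _ | g _] /=.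
  congr (_, _); first by rewrite ffunE unlift_none.
  by apply/ffunP => j; rewrite !ffunE liftK.
exact: fconsK.
Qed.

Lemma sum3_fcons m (F : {ffun 'I_m.+1 -> Z} -> {ffun 'I_m.+1 -> Z} -> {ffun 'I_m.+1 -> Z} -> R[i]) :
  \sum_a \sum_b \sum_o F a b o =
  \sum_(xa : Z) \sum_(xb : Z) \sum_(xo : Z) \sum_(fa : {ffun 'I_m -> Z})
     \sum_(fb : {ffun 'I_m -> Z}) \sum_(fo : {ffun 'I_m -> Z})
     F (fcons xa fa) (fcons xb fb) (fcons xo fo).
Proof.
rewrite sum_fcons; apply: eq_bigr => xa _.
transitivity (\sum_(fa : {ffun 'I_m -> Z}) \sum_(xb : Z) \sum_(fb : {ffun 'I_m -> Z}) \sum_(xo : Z)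
   \sum_(fo : {ffun 'I_m -> Z}) F (fcons xa fa) (fcons xb fb) (fcons xo fo)).
  apply: eq_bigr => fa _; rewrite sum_fcons; apply: eq_bigr => xb _.
  apply: eq_bigr => fb _; exact: sum_fcons.
rewrite exchange_big; apply: eq_bigr => xb _.
under eq_bigr do rewrite exchange_big.
by rewrite exchange_big.
Qed.

Lemma at_E m (f : {ffun 'I_m -> Z}) (i : 'I_m) : at_ f i = f i.
Proof.
rewrite /at_; case: insubP => [i' _ /val_inj -> //|].
by rewrite ltn_ord.
Qed.

Lemma at_ge m (f : {ffun 'I_m -> Z}) j : (m <= j)%N -> at_ f j = 0.
Proof. by move=> h; rewrite /at_ insubF // ltnNge h. Qed.

Lemma at_fcons0 m x (f : {ffun 'I_m -> Z}) : at_ (fcons x f) 0 = x.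
Proof. by rewrite (at_E _ ord0) ffunE unlift_none. Qed.

Lemma at_fconsS m x (f : {ffun 'I_m -> Z}) j : at_ (fcons x f) j.+1 = at_ f j.
Proof.
case: (ltnP j m) => hj.
  have -> : j.+1 = lift ord0 (Ordinal hj) by rewrite lift0.
  by rewrite at_E ffunE liftK -(at_E f (Ordinal hj)).
by rewrite !at_ge.
Qed.

Definition stepsp m (p : Z) (a b o : {ffun 'I_m -> Z}) : seq (Z * Z * Z) :=
  [seq ((if i is i'.+1 then at_ a i' else p) - at_ a i, at_ b i, at_ o i) | i <- iota 0 m].

Lemma stepsE m (a b o : {ffun 'I_m -> Z}) : steps a b o = stepsp 0 a b o.
Proof. by []. Qed.

Lemma stepsp_fcons m p xa xb xo (fa fb fo : {ffun 'I_m -> Z}) :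
  stepsp p (fcons xa fa) (fcons xb fb) (fcons xo fo) = (p - xa, xb, xo) :: stepsp xa fa fb fo.
Proof.
rewrite /stepsp /= !at_fcons0; congr (_ :: _).
rewrite -[1%N]addn0 iotaDl -map_comp; apply: eq_map => i /=.
rewrite add1n !at_fconsS; congr (_, _, _); congr (_ - _).
by case: i => [|i]; rewrite ?at_fcons0 ?at_fconsS.
Qed.

Fixpoint Lseq (l : seq (Z * Z * Z)) (s : Op R d n) : Op R d n :=
  match l with
  | [::] => s
  | (x, b, o) :: l' => Lseq l' (M o (conjop (opmul (Zop R b) (Xop R x)) s))
  end.

Lemma gen m : forall (s : Op R d n) (p : Z) (c : {ffun 'I_m -> Z}),
  \sum_(a : {ffun 'I_m -> Z}) \sum_(b : {ffun 'I_m -> Z}) \sum_(o : {ffun 'I_m -> Z})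
    ((N ^+ (2 * m))^-1 * tr (Lseq (stepsp p a b o) s) *
     \prod_(j < m) (ch (at_ a j + at_ o j) (at_ c j - at_ c j.+1))^*)
  = (ch p (at_ c 0))^* * tr (opmul (Zop R (- at_ c 0)) s) *
    \prod_(j < m) nu M (at_ c j) (at_ c j.+1).
Proof.
elim: m => [|m IH] s p c.
  rewrite (eq_bigr (fun _ => \sum_(b : {ffun 'I_0 -> Z}) \sum_(o : {ffun 'I_0 -> Z}) tr s)); last first.
    move=> a _; apply: eq_bigr => b _; apply: eq_bigr => o _.
    by rewrite big_ord0 muln0 expr0 invr1 mul1r mulr1.
  rewrite !sumr_const card_ffun card_ord expn0 !mulr1n big_ord0 mulr1.
  rewrite at_ge // chi0r stepC rmorph1 mul1r.
  by apply: eq_bigr => u _; rewrite chi0 invr1 mul1r.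
move: c; move=> c; rewrite -(fconsK c); move: (c ord0) [ffun j => c (lift ord0 j)] => c0 c'.
rewrite sum3_fcons.
transitivity (\sum_(xa : Z) \sum_(xb : Z) \sum_(xo : Z)
  ((N ^+ 2)^-1 * (ch (xa + xo) (c0 - at_ c' 0))^* *
     ((ch xa (at_ c' 0))^* * tr (opmul (Zop R (- at_ c' 0))
        (M xo (conjop (opmul (Zop R xb) (Xop R (p - xa))) s)))) *
  \prod_(j < m) nu M (at_ c' j) (at_ c' j.+1))).
  apply: eq_bigr => xa _; apply: eq_bigr => xb _; apply: eq_bigr => xo _.
  rewrite -[in RHS]mulrA -IH !mulr_sumr; apply: eq_bigr => fa _.
  rewrite !mulr_sumr; apply: eq_bigr => fb _.
  rewrite !mulr_sumr; apply: eq_bigr => fo _.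
  rewrite stepsp_fcons /= big_ord_recl /=.
  have bE : forall i, bump 0 i = i.+1 by [].
  under eq_bigr do rewrite bE !at_fconsS.
  rewrite !at_fcons0 !at_fconsS mulnS exprD invfM; ring.
under eq_bigr do under eq_bigr do rewrite -mulr_suml.
under eq_bigr do rewrite -mulr_suml.
rewrite -mulr_suml core big_ord_recl /=.
have bE : forall i, bump 0 i = i.+1 by [].
rewrite [in RHS](eq_bigr (fun i : 'I_m => nu M (at_ c' i) (at_ c' i.+1))); last by move=> i _; rewrite bE !at_fconsS.
rewrite !at_fcons0 !at_fconsS; ring.
Qed.


Lemma tr_scale (k : R[i]) (X : Op R d n) : tr (fun u v => k * X u v) = k * tr X.
Proof. by rewrite /tr mulr_sumr. Qed.

Lemma conjop_scale (G : Op R d n) (k : R[i]) (X : Op R d n) :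
  conjop G (fun u v => k * X u v) = (fun u v => k * conjop G X u v).
Proof.
apply/funext => u; apply/funext => v; rewrite /conjop /opmul mulr_sumr.
apply: eq_bigr => z _; rewrite mulrA; congr (_ * _).
by rewrite mulr_sumr; apply: eq_bigr => w _; rewrite mulrCA.
Qed.

Lemma conjop0 (G : Op R d n) : conjop G (fun _ _ => 0) = (fun _ _ => 0).
Proof.
apply/funext => u; apply/funext => v; rewrite /conjop /opmul.
apply: big1 => z _; rewrite big1 ?mul0r // => w _; exact: mulr0.
Qed.

Lemma M_scale o (k : R[i]) (X : Op R d n) :
  M o (fun u v => k * X u v) = (fun u v => k * M o X u v).
Proof.
have := hlin o k X (fun _ _ => 0); rewrite lin0 //.
have -> : (fun x y => k * X x y + (fun _ _ => 0 : R[i]) x y) = (fun x y => k * X x y).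
  by apply/funext => x; apply/funext => y; rewrite addr0.
move=> ->; apply/funext => x; apply/funext => y; by rewrite addr0.
Qed.

Lemma Lseq_scale l (k : R[i]) : forall X : Op R d n,
  Lseq l (fun u v => k * X u v) = (fun u v => k * Lseq l X u v).
Proof.
elim: l => [|[[x b] o] l IH] X //=.
by rewrite conjop_scale M_scale IH.
Qed.

Lemma Lseq0 l : Lseq l (fun _ _ => 0) = (fun _ _ => 0).
Proof.
elim: l => [|[[x b] o] l IH] //=.
by rewrite conjop0 lin0.
Qed.


Lemma psd_diag (I : finType) (A : I -> I -> R[i]) a : psd A -> 0 <= A a a.
Proof.
move=> h; have := h (fun x => (a == x)%:R).
rewrite (eq_bigr (fun x => (a == x)%:R * A x a)) //.
  by rewrite (@sum_delta_l I a (fun x => A x a)).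
move=> x _; rewrite conjC_nat.
exact: (@sum_delta_r I a (fun y => (a == x)%:R * A x y)).
Qed.

Lemma quad (I : finType) (A : I -> I -> R[i]) (a b : I) (t : R[i]) :
  \sum_x \sum_y ((a == x)%:R + t * (b == x)%:R)^* * A x y * ((a == y)%:R + t * (b == y)%:R)
  = A a a + t * A a b + t^* * (A b a + t * A b b).
Proof.
have inner : forall x, \sum_y A x y * ((a == y)%:R + t * (b == y)%:R) = A x a + t * A x b.
  move=> x; rewrite (eq_bigr (fun y => A x y * (a == y)%:R + t * A x y * (b == y)%:R)); last first.
    by move=> y _; rewrite mulrDr mulrCA mulrA.
  rewrite big_split /= (@sum_delta_r I a (fun y => A x y)).
  by rewrite (@sum_delta_r I b (fun y => t * A x y)).
rewrite (eq_bigr (fun x => (a == x)%:R * (A x a + t * A x b) + t^* * (b == x)%:R * (A x a + t * A x b))); last first.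
  move=> x _; rewrite (eq_bigr (fun y => ((a == x)%:R + t * (b == x)%:R)^* * (A x y * ((a == y)%:R + t * (b == y)%:R)))); last first.
    by move=> y _; rewrite mulrA.
  by rewrite -mulr_sumr inner rmorphD rmorphM /= !conjC_nat mulrDl.
rewrite big_split /= (@sum_delta_l I a (fun x => A x a + t * A x b)).
rewrite (eq_bigr (fun x => (b == x)%:R * (t^* * (A x a + t * A x b)))); last first.
  by move=> x _; rewrite mulrCA mulrA.
by rewrite (@sum_delta_l I b (fun x => t^* * (A x a + t * A x b))).
Qed.

Lemma psd_tr0 (A : Op R d n) : psd A -> tr A = 0 -> A = (fun _ _ => 0).
Proof.
move=> h h0.
have hd0 : forall a, A a a = 0.
  move=> a; apply: (psumr_eq0P (P := predT) (F := fun x => A x x)) => //.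
  by move=> i _; apply: psd_diag.
apply/funext => a; apply/funext => b.
case: (eqVneq a b) => [<-|ab]; first exact: hd0.
have q t : 0 <= t * A a b + t^* * A b a.
  by have := h (fun x => (a == x)%:R + t * (b == x)%:R); rewrite quad !hd0 mulr0 addr0 add0r.
have q1 := q 1; have q2 := q (-1); have q3 := q 'i; have q4 := q (- 'i).
rewrite rmorph1 !mul1r in q1.
rewrite rmorphN1 !mulN1r -opprD oppr_ge0 in q2.
have ci' := @conjCi (R[i]).
rewrite ci' in q3.
rewrite -ci' conjCK ci' in q4.
have e1 : A a b + A b a = 0 by apply/le_anti; rewrite q1 q2.
have e2 : 'i * A a b + - 'i * A b a = 0.
  apply/le_anti; rewrite q3 andbT -oppr_ge0 opprD -!mulNr opprK.
  exact: q4.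
have e3 : A a b = A b a.
  move: e2; rewrite mulNr -mulrBr => /eqP; rewrite mulf_eq0 (negbTE (@neq0Ci _)) /=.
  by rewrite subr_eq0 => /eqP.
move: e1; rewrite -e3 -mulr2n => /eqP; rewrite mulrn_eq0 /= => /eqP.
done.
Qed.


Lemma psd_scale (A : Op R d n) (k : R[i]) : psd A -> 0 <= k -> psd (fun u v => k * A u v).
Proof.
move=> h hk v.
rewrite (eq_bigr (fun a => k * \sum_b (v a)^* * A a b * v b)); last first.
  by move=> a _; rewrite mulr_sumr; apply: eq_bigr => b _; ring.
by rewrite -mulr_sumr mulr_ge0.
Qed.

Lemma tr_ge0 (A : Op R d n) : psd A -> 0 <= tr A.
Proof. by move=> h; apply: sumr_ge0 => i _; apply: psd_diag. Qed.

Lemma sum_I1 (F : 'I_1 * Z -> R[i]) : \sum_p F p = \sum_(z : Z) F (ord0, z).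
Proof.
apply: (reindex (fun z : Z => (ord0, z))).
exists snd => [z _ | [i z] _] //=.
by rewrite (ord1 i).
Qed.

Lemma psd_cp (Phi : Op R d n -> Op R d n) (A : Op R d n) :
  completely_positive Phi -> psd A -> psd (Phi A).
Proof.
move=> [_ hcp] hA v.
set X := (fun p q : 'I_1 * Z => A p.2 q.2).
have hX : psd X.
  move=> V; have := hA (fun z => V (ord0, z)).
  suff -> : \sum_(p : 'I_1 * Z) \sum_(q : 'I_1 * Z) (V p)^* * X p q * V q =
     \sum_(z : Z) \sum_(z' : Z) (V (ord0,z))^* * A z z' * V (ord0, z') by [].
  rewrite (@sum_I1 (fun p => \sum_q (V p)^* * X p q * V q)).
  apply: eq_bigr => z _.
  exact: (@sum_I1 (fun q => (V (ord0, z))^* * X (ord0, z) q * V q)).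
have := hcp 1%N _ hX (fun p => v p.2).
suff -> : \sum_(p : 'I_1 * Z) \sum_(q : 'I_1 * Z) (v p.2)^* * ampl Phi X p q * v q.2 =
   \sum_(z : Z) \sum_(z' : Z) (v z)^* * Phi A z z' * v z' by [].
rewrite (@sum_I1 (fun p => \sum_q (v p.2)^* * ampl Phi X p q * v q.2)).
apply: eq_bigr => z _.
exact: (@sum_I1 (fun q => (v z)^* * ampl Phi X (ord0, z) q * v q.2)).
Qed.

Lemma reorder4 (F : Z -> Z -> Z -> Z -> R[i]) :
  \sum_(a : Z) \sum_(b : Z) \sum_(z : Z) \sum_(x : Z) F a b z x =
  \sum_(x : Z) \sum_(z : Z) \sum_(a : Z) \sum_(b : Z) F a b z x.
Proof.
under eq_bigr do under eq_bigr do rewrite exchange_big.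
under eq_bigr do rewrite exchange_big.
rewrite exchange_big.
under eq_bigr do under eq_bigr do rewrite exchange_big.
by under eq_bigr do rewrite exchange_big.
Qed.

Lemma psd_conjop (G A : Op R d n) : psd A -> psd (conjop G A).
Proof.
move=> h v.
set w := fun z : Z => \sum_(b : Z) (G b z)^* * v b.
have := h w.
suff -> : \sum_a \sum_b (v a)^* * conjop G A a b * v b =
          \sum_x \sum_z (w x)^* * A x z * w z by [].
transitivity (\sum_(a : Z) \sum_(b : Z) \sum_(z : Z) \sum_(x : Z)
   (v a)^* * G a x * A x z * (G b z)^* * v b).
  apply: eq_bigr => a _; apply: eq_bigr => b _.
  rewrite /conjop /opmul /adj mulr_sumr mulr_suml; apply: eq_bigr => z _.
  rewrite mulr_suml mulr_sumr mulr_suml; apply: eq_bigr => x _; ring.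
rewrite reorder4; apply: eq_bigr => x _; apply: eq_bigr => z _.
rewrite /w rmorph_sum mulr_suml mulr_suml; apply: eq_bigr => a _.
rewrite mulr_sumr; apply: eq_bigr => b _.
rewrite rmorphM /= conjCK; ring.
Qed.


Hypothesis hcpM : forall o, completely_positive (M o).

Lemma run_Lseq l : forall s : Op R d n, psd s -> tr s = 1 -> run M s l = tr (Lseq l s).
Proof.
elim: l => [|[[x b] o] l IH] s hs h1 /=; first by rewrite h1.
set tau := conjop (opmul (Zop R b) (Xop R x)) s.
have ht : psd (M o tau) by apply: psd_cp; [exact: hcpM | exact: psd_conjop].
case: (eqVneq (tr (M o tau)) 0) => hp.
  rewrite hp mul0r (psd_tr0 ht hp) Lseq0 /tr.
  by rewrite big1.
rewrite IH.
- by rewrite Lseq_scale tr_scale mulVKf.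
- by apply: psd_scale => //; rewrite invr_ge0 tr_ge0.
- by rewrite tr_scale mulVf.
Qed.

End S.

Theorem theorem4 (R : realType) (d n : nat) (hd : (0 < d)%N)
    (M : Zdn d n -> Op R d n -> Op R d n) (hM : instrument M)
    (rho : Op R d n) (hrho : density rho)
    (m : nat) (c : {ffun 'I_m -> Zdn d n}) :
  bench_expectation M rho c = kappa M rho c.
Proof.
case: hM => hcp _ _; case: hrho => hpsd htr.
have hlin : forall o, linear_map (M o) by move=> o; case: (hcp o).
have G := gen hd hlin rho 0 c.
rewrite chi0 rmorph1 mul1r in G.
rewrite /kappa -G /bench_expectation.
apply: eq_bigr => a _; apply: eq_bigr => b _; apply: eq_bigr => o _.
by rewrite stepsE (run_Lseq hlin hcp).
Qed.
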